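(* Let $k$ be a positive integer and $S=K[x_1,\ldots,x_n]$. Then: if $n=4k$, $V(n,2)=\bigcup_{0\le i\le\sqrt k}W_{2k-i}$; if $n=4k+1$ with $k\neq 1$, $V(n,2)=\bigcup_{0\le i\le(\sqrt{1+4k}-1)/2}W_{2k-i}$; if $n=5$, $V(5,2)=W_2\cup C_5$; and if $n=4k+2$ or $n=4k+3$, $V(n,2)=\emptyset$. (Here $i$ ranges over integers.)
   Context: $K$ is a field; $G(I)$ is the minimal monomial generating set of a monomial ideal $I$. With $\sigma$ the bijection $x_{i_1}\cdots x_{i_k}\mapsto\{i_1,\ldots,i_k\}$, the facet complex $\delta_{\mathcal{F}}(I)$ has facets $\sigma(g)$, $g\in G(I)$, the Stanley–Reisner complex is $\delta_{\mathcal{N}}(I)=\{\sigma(g)\mid g\text{ square-free monomial},\ g\notin I\}$, and a square-free monomial ideal $I$ is an $f$-ideal if both have the same $f$-vector. $V(n,2)$ is the set of $f$-ideals of $S$ all of whose minimal generators have degree 2. For a nonempty proper $B\subset[n]$ with complement $\overline B$, $W_B=\{x_ix_j\mid i\ne j,\ i,j\in B\text{ or } i,j\in\overline B\}$; such an $f$-ideal $I$ is of $l$ type if $W_B\subseteq G(I)$ for some $B$ with $|B|=l$, and $W_l$ is the set of $f$-ideals of $S$ of $l$ type. For $n=5$, $C_5$ denotes the set of ideals of $K[x_1,\ldots,x_5]$ generated by $\{x_ix_j\mid v_iv_j\in E(T)\}$ where $T$ ranges over the cycles of length 5 on the vertex set $\{v_1,\ldots,v_5\}$ (for example $\langle x_1x_2,x_2x_3,x_3x_4,x_4x_5,x_1x_5\rangle$).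 *)

(* Defs.v *)
From mathcomp Require Import all_boot all_order all_fingroup.
Set Implicit Arguments. Unset Strict Implicit. Unset Printing Implicit Defensive.

(* Square-free monomials of S = K[x_1,...,x_n] are identified, via sigma,
   with subsets of [n] = 'I_n.  A square-free monomial ideal I of S is
   represented by the family of square-free monomials it contains
   (a family of subsets of 'I_n closed upwards); such an ideal is
   determined by this family (it is generated by it). *)

Section Defs.
Variable n : nat.
Implicit Types (F G : {set {set 'I_n}}) (A B : {set 'I_n}).

Definition sqf_ideal F : Prop :=
  forall A B, A \in F -> A \subset B -> B \in F.

Definition gen_ideal G : {set {set 'I_n}} :=
  [set A : {set 'I_n} | [exists g in G, g \subset A]].

Definition mingens F : {set {set 'I_n}} :=
  [set A in F | [forall B in F, (B \subset A) ==> (B == A)]].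

Definition facet_complex F : {set {set 'I_n}} :=
  [set A : {set 'I_n} | [exists g in mingens F, A \subset g]].

Definition SR_complex F : {set {set 'I_n}} := [set A : {set 'I_n} | A \notin F].

(* f_i = number of faces of dimension i, i.e. of cardinality i+1 *)
Definition fvec (D : {set {set 'I_n}}) (i : nat) : nat :=
  #|[set A in D | #|A| == i.+1]|.

Definition f_ideal F : Prop :=
  sqf_ideal F /\ forall i, fvec (facet_complex F) i = fvec (SR_complex F) i.

Definition Vn2 F : Prop :=
  f_ideal F /\ forall g, g \in mingens F -> #|g| = 2.

Definition WB B : {set {set 'I_n}} :=
  [set A : {set 'I_n} | [exists i : 'I_n, exists j : 'I_n, (i != j) &&
     (((i \in B) && (j \in B)) || ((i \notin B) && (j \notin B))) &&
     (A == [set i; j])]].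

Definition Wl (l : nat) F : Prop :=
  Vn2 F /\ exists B, [/\ 0 < #|B| < n, #|B| = l & WB B \subset mingens F].

End Defs.

(* C_5: ideals generated by the edges of a 5-cycle on {v_1,...,v_5};
   a 5-cycle is given by a cyclic ordering p 0, p 1, ..., p 4 of the vertices *)
Definition C5 (F : {set {set 'I_5}}) : Prop :=
  exists p : {perm 'I_5},
    F = gen_ideal [set [set p i; p (ordS i)] | i : 'I_5].

(* Main.v *)
Require Import Defs.
From mathcomp Require Import all_boot all_order all_fingroup.
From mathcomp Require Import zify.
Set Implicit Arguments. Unset Strict Implicit. Unset Printing Implicit Defensive.


Lemma sub_card_eq (T : finType) (A B : {set T}) : A \subset B -> #|B| <= #|A| -> A = B.
Proof. by move=> AB BA; apply/eqP; rewrite eqEcard AB BA. Qed.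

Section Gen.
Variable n : nat.
Variable F : {set {set 'I_n}}.
Hypothesis sqF : sqf_ideal F.
Implicit Types (A B g : {set 'I_n}).

Lemma mingen_below A : A \in F -> exists2 g, g \in mingens F & g \subset A.
Proof.
have [m] := ubnP #|A|; elim: m A => // m IH A hA AF.
case: (boolP (A \in mingens F)) => [Am|]; first by exists A.
rewrite inE AF /= => /forall_inPn [B BF]; rewrite negb_imply => /andP[BA nBA].
have BpA : B \proper A by rewrite properEneq nBA BA.
have [g gm gB] := IH B (leq_trans (proper_card BpA) (ltnSE hA)) BF.
by exists g => //; apply: subset_trans gB BA.
Qed.

Lemma gen_mingens : F = gen_ideal (mingens F).
Proof.
apply/setP => A; rewrite inE; apply/idP/exists_inP.
  by move/mingen_below => [g ? ?]; exists g.
by case=> g; rewrite inE => /andP[gF _] gA; apply: sqF gF gA.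
Qed.

Hypothesis H2 : forall g, g \in mingens F -> #|g| = 2.

Lemma F_card A : A \in F -> 2 <= #|A|.
Proof. by move/mingen_below=> [g /H2 <- /subset_leq_card]. Qed.

Lemma F2_min A : A \in F -> #|A| = 2 -> A \in mingens F.
Proof.
move=> AF A2; have [g gm gA] := mingen_below AF.
by rewrite -(sub_card_eq gA) // A2 H2.
Qed.

Hypothesis Hf : forall i, fvec (facet_complex F) i = fvec (SR_complex F) i.

Lemma all3 A : #|A| = 3 -> A \in F.
Proof.
move=> A3; apply/negPn/negP => nAF.
suff: fvec (facet_complex F) 2 = 0.
  move=> H0; move: (Hf 2); rewrite H0 => /esym/eqP; rewrite cards_eq0 => /eqP/setP/(_ A).
  by rewrite !inE nAF A3 eqxx.
apply/eqP; rewrite cards_eq0; apply/eqP/setP => B; rewrite !inE.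
apply/negbTE/negP => /andP[/exists_inP[g gm Bg] /eqP hB].
by have := subset_leq_card Bg; rewrite hB H2.
Qed.

Lemma count2 : #|[set A : {set 'I_n} | (A \in F) && (#|A| == 2)]| =
               #|[set A : {set 'I_n} | (A \notin F) && (#|A| == 2)]|.
Proof.
transitivity (fvec (facet_complex F) 1); last first.
  by rewrite Hf /fvec; apply: eq_card => B; rewrite !inE.
rewrite /fvec; apply: eq_card => B; rewrite !inE.
case: (boolP (#|B| == 2)) => /= hB; rewrite ?andbF ?andbT //; move/eqP: hB => hB.
apply/idP/exists_inP.
  move=> BF; exists B; [exact: F2_min | exact: subxx].
case=> g gm Bg; rewrite (sub_card_eq Bg) ?hB ?H2 //.
by move: gm; rewrite inE => /andP[].
Qed.

Definition h (i j : 'I_n) := (i != j) && ([set i; j] \notin F).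

Lemma h_sym (i j : 'I_n) : h i j = h j i.
Proof. by rewrite /h eq_sym setUC. Qed.

Lemma h_irr (i : 'I_n) : h i i = false.
Proof. by rewrite /h eqxx. Qed.

Lemma tri (i j l : 'I_n) : h i j -> h j l -> h i l -> False.
Proof.
move=> /andP[ij nij] /andP[jl njl] /andP[il nil].
have: [set i; j; l] \in F.
  apply: all3; rewrite -setUA cardsU1 cards2 jl !inE (negbTE ij) (negbTE il) //.
move/mingen_below => [g gm gs]; have := H2 gm => /eqP /cards2P [x [y [xy gE]]].
have gF : g \in F by move: gm; rewrite inE => /andP[].
move: gs; rewrite gE subUset !sub1set !inE => /andP[hx hy].
have sy : forall a b : 'I_n, ([set a; b] \in F) = ([set b; a] \in F).
  by move=> a b; rewrite setUC.
move: gF xy; rewrite gE.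
move: hx hy => /orP[/orP[]|] /eqP-> /orP[/orP[]|] /eqP-> F1; rewrite ?eqxx //= => _;
  rewrite ?(sy j i) ?(sy l i) ?(sy l j) in F1;
  by move: nij njl nil; rewrite F1.
Qed.

Definition N (v : 'I_n) := [set u | h v u].

Lemma injv (v : 'I_n) : injective (fun u => [set v; u]).
Proof.
move=> u u' /= E; have: u \in [set v; u'] by rewrite -E set22.
rewrite !inE => /orP[/eqP uv|/eqP//]; subst u.
have: u' \in [set v; v] by rewrite E set22.
by rewrite !inE orbb => /eqP ->.
Qed.

Lemma sum_deg : \sum_v #|N v| = 'C(n, 2).
Proof.
set Q := [set A : {set 'I_n} | (A \notin F) && (#|A| == 2)].
have C2 : 'C(n, 2) = #|Q| + #|Q|.
  rewrite -{1}(card_ord n) -card_draws.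
  rewrite -(cardsID F [set A : {set 'I_n} | #|A| == 2]).
  congr (_ + _); last by apply: eq_card => A; rewrite !inE andbC.
  rewrite /Q -count2; apply: eq_card => A; rewrite !inE andbC //.
rewrite C2; symmetry.
transitivity (\sum_(A in Q) #|A|).
  by rewrite (eq_bigr (fun _ => 2)) ?sum_nat_const ?muln2 ?addnn // => A;
     rewrite inE => /andP[_ /eqP].
rewrite (eq_bigr (fun A => \sum_(v in A) 1)); last by move=> A _; rewrite sum1_card.
rewrite (exchange_big_dep predT) //=.
apply: eq_bigr => v _; rewrite sum1dep_card.
rewrite -[#|N v|](card_imset _ (@injv v)); apply: eq_card => A.
rewrite !inE; apply/andP/imsetP.
  case=> /andP[nAF /cards2P[x [y [xy AE]]]] vA; move: vA nAF xy; rewrite AE !inE.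
  case/orP=> /eqP <- nAF xy.
    by exists y => //; rewrite inE /h xy.
  exists x; last by rewrite setUC.
  by rewrite inE /h eq_sym xy setUC.
case=> u; rewrite inE => /andP[vu nF] ->; split; last by rewrite set21.
by rewrite nF cards2 vu.
Qed.


Lemma edge_sum : \sum_v \sum_(u in N v) (#|N v| + #|N u|) =
                 2 * \sum_v #|N v| * #|N v|.
Proof.
rewrite (eq_bigr (fun v => #|N v| * #|N v| + \sum_(u in N v) #|N u|)); last first.
  by move=> v _; rewrite big_split /= sum_nat_const.
rewrite big_split /= mul2n -addnn; congr (_ + _).
rewrite (exchange_big_dep predT) //=.
apply: eq_bigr => u _; rewrite sum_nat_cond_const; congr (_ * _).
by apply: eq_card => v; rewrite !inE h_sym.
Qed.

Lemma dich : 0 < n -> ~ (exists u v, h u v /\ n <= #|N u| + #|N v|) ->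
  forall v, (#|N v|).*2 = n.-1.
Proof.
move=> n0 nE.
have bd : 2 * \sum_v #|N v| * #|N v| <= n.-1 * 'C(n, 2).
  rewrite -edge_sum -sum_deg big_distrr /=; apply: leq_sum => v _.
  rewrite mulnC -sum_nat_const; apply: leq_sum => u; rewrite inE => hvu.
  rewrite -ltnS prednK // ltnNge; apply/negP => le; apply: nE; exists v, u; split => //.
have C2 : 'C(n, 2).*2 = n * n.-1.
  by have := mul_bin_diag n 1; rewrite bin1 -mul2n => ->.
have key := leqif_sum (P := predT) (fun v _ => nat_Cauchy (#|N v|).*2 n.-1).
have: [forall v, (#|N v|).*2 == n.-1].
  rewrite -key.2 eqn_leq key.1 /=.
  have e1 : \sum_v ((#|N v|).*2 ^ 2 + n.-1 ^ 2) =
            4 * \sum_v #|N v| * #|N v| + n * n.-1 ^ 2.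
    rewrite big_split /= sum_nat_const card_ord big_distrr /=; congr (_ + _).
    by apply: eq_bigr => w _; rewrite -mul2n; nia.
  have e2 : \sum_v 2 * ((#|N v|).*2 * n.-1) = 4 * n.-1 * \sum_v #|N v|.
    by rewrite big_distrr /=; apply: eq_bigr => w _; rewrite -mul2n; nia.
  rewrite e1 e2 sum_deg.
  move: bd C2; rewrite -mul2n; nia.
by move/forallP => H v; apply/eqP; apply: H.
Qed.


Lemma disjN u v : h u v -> forall x, x \in N u -> x \in N v -> False.
Proof.
move=> huv x; rewrite !inE => hux hvx.
by apply: (@tri u x v) => //; rewrite h_sym.
Qed.

Lemma bip u v : h u v -> n <= #|N u| + #|N v| ->
  exists X : {set 'I_n}, [/\ 0 < #|X| < n, WB X \subset mingens F &
     n * n.-1 <= 4 * (#|X| * (n - #|X|))].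
Proof.
move=> huv hn.
have disj := disjN huv.
have cover : forall x, (x \in N u) || (x \in N v).
  have I0 : N u :&: N v = set0.
    apply/eqP; rewrite -subset0; apply/subsetP => x; rewrite inE => /andP[a b].
    by case: (disj x a b).
  have E : N u :|: N v = setT.
    apply/eqP; rewrite eqEcard subsetT cardsT card_ord /=.
    by have := cardsUI (N u) (N v); rewrite I0 cards0 addn0 => ->.
  move=> x; have: x \in N u :|: N v by rewrite E inE.
  by rewrite inE.
set X := N v.
have same : forall i j, (i \in X) = (j \in X) -> ~~ h i j.
  move=> i j; case: (boolP (i \in X)) => iX; case: (boolP (j \in X)) => jX // _;
    apply/negP => hij.
    move: iX jX; rewrite !inE => hvi hvj.
    by apply: (@tri i j v) => //; rewrite h_sym.
  have iU : i \in N u by move: (cover i); rewrite (negbTE iX) orbF.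
  have jU : j \in N u by move: (cover j); rewrite (negbTE jX) orbF.
  move: iU jU; rewrite !inE => hui huj.
  by apply: (@tri i j u) => //; rewrite h_sym.
have uX : u \in X by rewrite inE h_sym.
have vX : v \notin X by rewrite inE h_irr.
have cC := cardsC X; rewrite card_ord in cC.
have cX : 0 < #|X| by apply/card_gt0P; exists u.
have cCX : 0 < #|~: X| by apply/card_gt0P; exists v; rewrite inE.
have bound : 'C(n, 2) <= #|X| * #|~: X| + #|~: X| * #|X|.
  rewrite -sum_deg (bigID (mem X)) /=; apply: leq_add.
    rewrite -sum_nat_const; apply: leq_sum => w wX; apply: subset_leq_card.
    apply/subsetP => x; rewrite in_setC [x \in N w]inE => hwx; apply/negP => xX.
    by move: (same w x); rewrite xX wX hwx => /(_ erefl).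
  rewrite -sum_nat_cond_const; apply: leq_sum => w wX.
  apply: subset_leq_card.
  apply/subsetP => x; rewrite [x \in N w]inE => hwx; apply/negPn/negP => xX.
  by move: (same w x); rewrite (negbTE xX) (negbTE wX) hwx => /(_ erefl).
exists X; split.
- by rewrite cX /= -[X in _ < X]cC -{1}[#|X|]addn0 ltn_add2l.
- apply/subsetP => A; rewrite inE => /existsP[i /existsP[j /andP[/andP[ij side] /eqP AE]]].
  rewrite AE; apply: F2_min; last by rewrite cards2 ij.
  have : ~~ h i j.
    apply: same; case/orP: side => /andP[a b]; [by rewrite a b | by rewrite (negbTE a) (negbTE b)].
  by rewrite /h ij /= negbK.
- have C2 : 'C(n, 2).*2 = n * n.-1.
    by have := mul_bin_diag n 1; rewrite bin1 -mul2n => ->.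
  have e := congr1 (subn^~ #|X|) cC; rewrite /= addKn in e.
  rewrite e [(n - _) * _]mulnC in bound; rewrite -C2 -mul2n.
  move: bound; set a := #|X| * (n - #|X|); lia.
Qed.


Lemma key_ineq x a b : h x a -> h x b ->
  #|N x| + #|N a| + #|N b| <= n + #|N a :&: N b|.
Proof.
move=> hxa hxb.
have I0 : N x :&: (N a :|: N b) = set0.
  apply/eqP; rewrite -subset0; apply/subsetP => y; rewrite !inE => /andP[hxy /orP[hay|hby]].
    by case: (@tri x a y).
  by case: (@tri x b y).
have c1 := cardsUI (N x) (N a :|: N b); rewrite I0 cards0 addn0 in c1.
have c2 := cardsUI (N a) (N b).
have c3 : #|N x :|: (N a :|: N b)| <= n.
  by have := max_card (mem (N x :|: (N a :|: N b))); rewrite card_ord.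
lia.
Qed.

Lemma reg_false k : n = (4 * k).+1 -> 2 <= k ->
  (forall v, (#|N v|).*2 = n.-1) -> False.
Proof.
move=> nk k2 reg.
have dv : forall v, #|N v| = 2 * k.
  by move=> v; have := reg v; rewrite -mul2n; lia.
have n0 : 0 < n by lia.
pose v := Ordinal n0.
have : 0 < #|N v| by rewrite dv; lia.
case/card_gt0P => u; rewrite inE => hvu.
have huv : h u v by rewrite h_sym.
have disj := disjN huv.
have : ~~ ([set: 'I_n] \subset N u :|: N v).
  apply/negP => /subset_leq_card; rewrite cardsT card_ord.
  have := cardsUI (N u) (N v).
  have -> : N u :&: N v = set0.
    apply/eqP; rewrite -subset0; apply/subsetP => x; rewrite inE => /andP[a b].
    by case: (disj x a b).
  rewrite cards0 !dv addn0 => ->; lia.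
case/subsetPn => z _; rewrite inE negb_or => /andP[zU zV].
have cover : forall y, y != z -> (y \in N u) || (y \in N v).
  have : z |: (N u :|: N v) = setT.
    apply/eqP; rewrite eqEcard subsetT cardsT card_ord cardsU1 inE negb_or zU zV /=.
    have := cardsUI (N u) (N v).
    have -> : N u :&: N v = set0.
      apply/eqP; rewrite -subset0; apply/subsetP => x; rewrite inE => /andP[a b].
      by case: (disj x a b).
    rewrite cards0 !dv addn0 => ->; lia.
  move=> E y yz; have : y \in z |: (N u :|: N v) by rewrite E inE.
  by rewrite !inE (negbTE yz).
have Nz : forall y, y \in N z -> (y \in N u) || (y \in N v).
  move=> y; rewrite inE => hzy; apply: cover; apply/eqP => yz.
  by rewrite yz h_irr in hzy.
have split2 : #|N z :&: N u| + #|N z :&: N v| = 2 * k.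
  rewrite -(dv z) -(cardsID (N u) (N z)); congr (_ + _).
  apply: eq_card => y; rewrite !inE.
  case: (boolP (h z y)) => hzy; rewrite ?andbF ?andFb ?andbT ?andTb //.
  have := Nz y; rewrite inE hzy => /(_ isT); rewrite !inE => /orP[hu|hv].
    have hv0 : h v y = false.
      by apply/negbTE/negP => hv'; apply: (disj y); rewrite inE.
    by rewrite hu hv0.
  have hu0 : h u y = false.
    by apply/negbTE/negP => hu'; apply: (disj y); rewrite inE.
  by rewrite hv hu0.
have cu : 0 < #|N z :&: N u|.
  rewrite lt0n; apply/negP => /eqP c0; rewrite c0 add0n in split2.
  have E : N z :&: N v = N v by apply: sub_card_eq; rewrite ?subsetIr // split2 dv.
  have : u \in N z :&: N v by rewrite E inE.
  rewrite !inE => /andP[hzu _]; move: zU; rewrite inE h_sym hzu //.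
have cv : 0 < #|N z :&: N v|.
  rewrite lt0n; apply/negP => /eqP c0; rewrite c0 addn0 in split2.
  have E : N z :&: N u = N u by apply: sub_card_eq; rewrite ?subsetIr // split2 dv.
  have : v \in N z :&: N u by rewrite E inE.
  rewrite !inE => /andP[hzv _]; move: zV; rewrite inE h_sym hzv //.
have fin : forall w, 0 < #|N z :&: N w| -> #|N z :&: N w| <= k -> False.
  move=> w /card_gt0P [x]; rewrite !inE => /andP[hzx hwx] le.
  have := key_ineq (x := x) (a := z) (b := w); rewrite h_sym hzx h_sym hwx.
  move=> /(_ erefl erefl); rewrite !dv; lia.
case: (leqP #|N z :&: N u| k) => [le|lt].
  exact: fin cu le.
by apply: (fin v cv); lia.
Qed.


Lemma mingensE : mingens F = [set A | (A \in F) && (#|A| == 2)].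
Proof.
apply/setP => A; rewrite [in RHS]inE; apply/idP/andP.
  by move=> Am; split; [move: Am; rewrite inE => /andP[] | rewrite H2].
by case=> AF /eqP A2; apply: F2_min.
Qed.

Lemma C2Q : 'C(n, 2) = #|mingens F| + #|mingens F|.
Proof.
rewrite -{1}(card_ord n) -card_draws.
rewrite -(cardsID F [set A : {set 'I_n} | #|A| == 2]).
rewrite mingensE; congr (_ + _); first by apply: eq_card => A; rewrite !inE andbC.
rewrite count2; apply: eq_card => A; rewrite !inE andbC //.
Qed.

End Gen.

Section Crit.
Variable n : nat.
Variable E : {set {set 'I_n}}.
Hypothesis E2 : forall g, g \in E -> #|g| = 2.
Hypothesis Ecov : forall x : 'I_n, exists2 g, g \in E & x \in g.
Hypothesis E3 : forall A : {set 'I_n}, 3 <= #|A| -> exists2 g, g \in E & g \subset A.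
Hypothesis Ecard : 'C(n, 2) = #|E| + #|E|.

Lemma genF A : (A \in gen_ideal E) = [exists g in E, g \subset A].
Proof. by rewrite inE. Qed.

Lemma crit_mingens : mingens (gen_ideal E) = E.
Proof.
apply/setP => A; rewrite inE genF; apply/andP/idP.
  case=> /exists_inP[g gE gA] /forall_inP mn.
  have : g \in gen_ideal E by rewrite genF; apply/exists_inP; exists g.
  by move/mn; rewrite gA => /eqP <-.
move=> AE; split; first by apply/exists_inP; exists A.
apply/forall_inP => B; rewrite genF => /exists_inP[g gE gB]; apply/implyP => BA.
have gA : g = A by apply: sub_card_eq; [apply: subset_trans gB BA | rewrite !E2].
by rewrite eqEsubset BA -gA gB.
Qed.

Lemma crit : Vn2 (gen_ideal E).
Proof.
split; last by rewrite crit_mingens.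
split.
  move=> A B; rewrite !genF => /exists_inP[g gE gA] AB; apply/exists_inP; exists g => //.
  exact: subset_trans gA AB.
have facE A : (A \in facet_complex (gen_ideal E)) = [exists g in E, A \subset g].
  by rewrite inE crit_mingens.
move=> [|[|i]]; rewrite /fvec.
- apply: eq_card => A; rewrite !inE ?crit_mingens.
  case: (boolP (#|A| == 1)); rewrite ?andbF ?andFb ?andbT ?andTb //.
  move/cards1P => [x ->].
  have [g gE xg] := Ecov x.
  have -> : [exists g0 in E, [set x] \subset g0].
    by apply/exists_inP; exists g; rewrite // sub1set.
  apply/esym/negP => /exists_inP[g' g'E g'x].
  by have := subset_leq_card g'x; rewrite E2 // cards1.
- have -> : [set A in facet_complex (gen_ideal E) | #|A| == 2] = E.
    apply/setP => A; rewrite !inE ?crit_mingens; apply/andP/idP.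
      case=> /exists_inP[g gE Ag] /eqP A2.
      by rewrite (sub_card_eq Ag) // A2 E2.
    by move=> AE; split; [apply/exists_inP; exists A | rewrite E2].
  apply/eqP; rewrite -(eqn_add2l #|E|) -Ecard -{1}(card_ord n) -card_draws.
  rewrite -(cardsID (gen_ideal E) [set A : {set 'I_n} | #|A| == 2]).
  apply/eqP; congr (_ + _); apply: eq_card => A; rewrite !inE.
    apply/andP/idP.
      case=> /eqP A2 /exists_inP[g gE gA].
      by rewrite -(sub_card_eq gA) // A2 E2.
    by move=> AE; split; [rewrite E2 | apply/exists_inP; exists A].
  by [].
- apply: eq_card => A; rewrite !inE ?crit_mingens.
  case: (boolP (#|A| == i.+3)) => /eqP Ai; rewrite ?andbF ?andFb ?andbT ?andTb //.
  have -> : [exists g in E, A \subset g] = false.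
    apply/negbTE/negP => /exists_inP[g gE Ag].
    have Ai2 : #|A| = i.+3 := Ai.
    by have := subset_leq_card Ag; rewrite (E2 gE) Ai2.
  have [g gE gA] : exists2 g, g \in E & g \subset A by apply: E3; rewrite Ai.
  by apply/esym/negbTE; rewrite negbK; apply/exists_inP; exists g.
Qed.
End Crit.


Definition cyc (p : {perm 'I_5}) : {set {set 'I_5}} :=
  [set [set p i; p (ordS i)] | i : 'I_5].

Lemma ordS_ne (i : 'I_5) : ordS i != i.
Proof. by case: i => [[|[|[|[|[|?]]]]] ?]. Qed.

Lemma ordSS_ne (i : 'I_5) : ordS (ordS i) != i.
Proof. by case: i => [[|[|[|[|[|?]]]]] ?]. Qed.

Lemma cyc_inj (p : {perm 'I_5}) : injective (fun i => [set p i; p (ordS i)]).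
Proof.
move=> i j /= E.
have : p i \in [set p j; p (ordS j)] by rewrite -E set21.
rewrite !inE !(inj_eq perm_inj) => /orP[/eqP //|/eqP ij].
have : p (ordS i) \in [set p j; p (ordS j)] by rewrite -E set22.
rewrite !inE !(inj_eq perm_inj) => /orP[/eqP|/eqP].
  by rewrite ij => /eqP; rewrite (negbTE (ordSS_ne j)).
by move/ordS_inj.
Qed.

Lemma cyc_card p : #|cyc p| = 5.
Proof. by rewrite card_imset ?card_ord //; apply: cyc_inj. Qed.

Lemma cyc_Vn2 p : Vn2 (gen_ideal (cyc p)).
Proof.
apply: crit.
- move=> g /imsetP[i _ ->]; rewrite cards2 (inj_eq perm_inj) eq_sym ordS_ne //.
- move=> x; exists [set p ((p^-1)%g x); p (ordS ((p^-1)%g x))].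
    by apply/imsetP; exists ((p^-1)%g x).
  by rewrite permKV set21.
- move=> A A3; case: (boolP [exists g in cyc p, g \subset A]) => [/exists_inP[g ? ?]|no];
    first by exists g.
  exfalso.
  pose sg x := p (ordS ((p^-1)%g x)).
  have sg_inj : injective sg by move=> x y /perm_inj /ordS_inj /perm_inj.
  have sub : sg @: A \subset ~: A.
    apply/subsetP => y /imsetP[x xA ->]; rewrite inE; apply/negP => sxA.
    move/negP: no; apply; apply/exists_inP; exists [set x; sg x].
      by apply/imsetP; exists ((p^-1)%g x); rewrite // permKV.
    by rewrite subUset !sub1set xA.
  have := subset_leq_card sub; rewrite card_imset //; have := cardsC A; rewrite card_ord.
  lia.
- by rewrite cyc_card.
Qed.

Lemma C5_Vn2 F : C5 F -> Vn2 F.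
Proof. by case=> p ->; apply: cyc_Vn2. Qed.

Lemma reg5 (F : {set {set 'I_5}}) : Vn2 F -> (forall v, #|N F v| = 2) -> C5 F.
Proof.
case=> [[sqF Hf] H2] reg.
pose gr (x y : 'I_5) := (x != y) && ([set x; y] \in F).
have hgr : forall x y, x != y -> gr x y = ~~ h F x y.
  by move=> x y xy; rewrite /gr /h xy negbK.
have gr_sym : forall x y, gr x y = gr y x by move=> x y; rewrite /gr eq_sym setUC.
have gr_irr : forall x, gr x x = false by move=> x; rewrite /gr eqxx.
have gr_ne : forall x y, gr x y -> x != y by move=> x y /andP[].
have ng2 : forall v, #|[set u | gr v u]| = 2.
  move=> v; have := cardsID [set u | gr v u] [set~ v]; rewrite cardsC1 card_ord /=.
  have -> : [set~ v] :&: [set u | gr v u] = [set u | gr v u].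
    apply/setP => u; rewrite !inE; case: (eqVneq u v) => [->|]; rewrite ?gr_irr //.
  have -> : [set~ v] :\: [set u | gr v u] = N F v.
    apply/setP => u; rewrite !inE; case: (eqVneq u v) => [->|uv].
      by rewrite h_irr gr_irr.
    by rewrite andbT hgr ?negbK // eq_sym uv.
  by rewrite reg => /eqP; rewrite -[X in _ == X]/(2 + 2) eqn_add2r => /eqP.
have ctri : forall x y z, x != y -> y != z -> x != z -> [|| gr x y, gr y z | gr x z].
  move=> x y z xy yz xz; apply/negPn/negP; rewrite !negb_or => /and3P[a b c].
  rewrite hgr // negbK in a; rewrite hgr // negbK in b; rewrite hgr // negbK in c.
  by case: (tri H2 Hf a b c).
pose o : 'I_5 := ord0.
have [a [b [ab Ev0]]] : exists a b, a != b /\ [set u | gr o u] = [set a; b].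
  by apply/cards2P; rewrite ng2.
have ga : gr o a.
  have : a \in [set u | gr o u] by rewrite Ev0 set21.
  by rewrite inE.
have gb : gr o b.
  have : b \in [set u | gr o u] by rewrite Ev0 set22.
  by rewrite inE.
have card3 : #|[set o; a; b]| = 3.
  rewrite -setUA cardsU1 cards2 ab !inE negb_or (gr_ne _ _ ga) (gr_ne _ _ gb) //.
have [c [e [ce ER]]] : exists c e, c != e /\ ~: [set o; a; b] = [set c; e].
  apply/cards2P; have := cardsC [set o; a; b]; rewrite card3 card_ord.
  by move/eqP; rewrite -(eqn_add2l 3).
have : c \in ~: [set o; a; b] by rewrite ER set21.
rewrite !inE !negb_or => /andP[/andP[c0 ca] cb].
have : e \in ~: [set o; a; b] by rewrite ER set22.
rewrite !inE !negb_or => /andP[/andP[e0 ea] eb].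
have ngc : ~~ gr o c.
  apply/negP => g0c; have : c \in [set u | gr o u] by rewrite inE.
  by rewrite Ev0 !inE (negbTE ca) (negbTE cb).
have nge : ~~ gr o e.
  apply/negP => g0e; have : e \in [set u | gr o u] by rewrite inE.
  by rewrite Ev0 !inE (negbTE ea) (negbTE eb).
have univ : forall x, x = o \/ x = a \/ x = b \/ x = c \/ x = e.
  move=> x; case: (boolP (x \in [set o; a; b])).
    by rewrite !inE => /orP[/orP[]|] /eqP ->; tauto.
  by rewrite -in_setC ER !inE => /orP[] /eqP ->; tauto.
have gce : gr c e.
  have := ctri o c e; rewrite (eq_sym o c) c0 (eq_sym o e) e0 ce => /(_ isT isT isT).
  by rewrite (negbTE ngc) (negbTE nge) orbF.
have nbr : forall w w', gr w w' -> w' != o -> gr o w' \/ w' = c \/ w' = e.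
  move=> w w' gww' w'o.
  move: w'o; case: (univ w') => [->|[->|[->|[->|->]]]] w'o;
    [by rewrite eqxx in w'o | by left | by left | by right; left | by right; right].
have [y gcy /andP[yo ye]] : exists2 y, gr c y & (y != o) && (y != e).
  have : ~~ ([set u | gr c u] \subset [set e]).
    by apply/negP => /subset_leq_card; rewrite ng2 cards1.
  case/subsetPn => y; rewrite !inE => gcy ye; exists y => //; rewrite ye andbT.
  by apply/eqP => yo; move: gcy; rewrite yo gr_sym (negbTE ngc).
have g0y : gr o y.
  case: (nbr c y gcy yo) => [//|[yc|ye']].
    by rewrite yc gr_irr in gcy.
  by rewrite ye' eqxx in ye.
have [y' gey' /andP[y'o y'c]] : exists2 y', gr e y' & (y' != o) && (y' != c).
  have : ~~ ([set u | gr e u] \subset [set c]).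
    by apply/negP => /subset_leq_card; rewrite ng2 cards1.
  case/subsetPn => y'; rewrite !inE => gey' y'c; exists y' => //; rewrite y'c andbT.
  by apply/eqP => yo2; move: gey'; rewrite yo2 gr_sym (negbTE nge).
have g0y' : gr o y'.
  case: (nbr e y' gey' y'o) => [//|[yc|ye']].
    by rewrite yc eqxx in y'c.
  by rewrite ye' gr_irr in gey'.
have yy' : y != y'.
  apply/eqP => E; rewrite -E in gey'.
  have : [set o; c; e] \subset [set u | gr y u].
    by rewrite !subUset !sub1set !inE (gr_sym y) g0y (gr_sym y) gcy (gr_sym y) gey'.
  move/subset_leq_card; rewrite ng2 -setUA cardsU1 cards2 ce !inE negb_or.
  by rewrite eq_sym c0 eq_sym e0.
have oy : o != y by apply: gr_ne g0y.
have oy' : o != y' by apply: gr_ne g0y'.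
have yc : y != c by apply/eqP => E; move: ngc; rewrite -E g0y.
have y'c' : y' != c by apply/eqP => E; move: ngc; rewrite -E g0y'.
have ye2 : y != e by apply/eqP => E; move: nge; rewrite -E g0y.
have ey' : e != y' by apply/eqP => E; move: nge; rewrite E g0y'.
pose s := [:: o; y; c; e; y'].
have us : uniq s.
  rewrite /s /= !inE !negb_or oy eq_sym c0 eq_sym e0 oy' yc ye2 yy' ce eq_sym y'c' ey'.
  by [].
have f_inj : injective (fun i : 'I_5 => nth o s i).
  move=> i j /eqP; rewrite nth_uniq // => /eqP ij; exact: val_inj.
pose p := perm f_inj.
have edges : forall i, gr (p i) (p (ordS i)).
  move=> i; rewrite !permE.
  case: i => [[|[|[|[|[|?]]]]] Hi] //=.
  - by rewrite gr_sym.
  - by rewrite gr_sym.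
exists p; rewrite (gen_mingens sqF); congr (gen_ideal _); symmetry.
apply: sub_card_eq.
  apply/subsetP => A /imsetP[i _ ->]; have /andP[ne inF] := edges i.
  by apply: (F2_min H2) => //; rewrite cards2 ne.
have := C2Q H2 Hf; rewrite cyc_card => /eqP.
move/eqP => ee; have e' : 10 = #|mingens F| + #|mingens F| := ee.
by rewrite -leq_double -addnn -e'.
Qed.


Lemma t1 k b : 0 < k -> 0 < b -> b.*2 <= 4 * k -> (4 * k) * (4 * k).-1 <= 4 * (b * (4 * k - b)) ->
  (2 * k - b) * (2 * k - b) <= k.
Proof. move=> *. nia. Qed.
Lemma t2 k b : 0 < k -> 0 < b -> b.*2 <= 4 * k + 1 -> (4 * k + 1) * (4 * k + 1).-1 <= 4 * (b * (4 * k + 1 - b)) ->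
  (2 * (2 * k - b) + 1) ^ 2 <= 1 + 4 * k.
Proof. move=> *. nia. Qed.
Lemma t3 b : 0 < b -> b.*2 <= 5 -> 5 * 5.-1 <= 4 * (b * (5 - b)) -> b = 2.
Proof. move=> *. nia. Qed.
Lemma t4 k m : (4 * k + 2) * (4 * k + 2).-1 = 2 * (m + m) -> False.
Proof. move=> *. nia. Qed.
Lemma t5 k m : (4 * k + 3) * (4 * k + 3).-1 = 2 * (m + m) -> False.
Proof. move=> *. nia. Qed.

Lemma fwd n (F : {set {set 'I_n}}) : Vn2 F -> 0 < n ->
  (exists X : {set 'I_n}, [/\ 0 < #|X| < n, WB X \subset mingens F &
     n * n.-1 <= 4 * (#|X| * (n - #|X|))]) \/ (forall v, (#|N F v|).*2 = n.-1).
Proof.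
case=> [[sqF Hf] H2] n0.
case: (boolP [exists u, exists v, h F u v && (n <= #|N F u| + #|N F v|)]).
  case/existsP => u /existsP[v /andP[huv le]]; left; have [X [a b c]] := bip H2 Hf huv le.
  by exists X; split.
move=> ne; right; apply: (dich H2 Hf n0) => -[u [v [huv le]]].
by move/negP: ne; apply; apply/existsP; exists u; apply/existsP; exists v; rewrite huv le.
Qed.

Lemma WB_C n (B : {set 'I_n}) : WB (~: B) = WB B.
Proof.
apply/setP => A; rewrite !inE; apply: eq_existsb => i; apply: eq_existsb => j.
by rewrite !inE; case: (i \in B); case: (j \in B); rewrite /= ?orbF ?orbT ?andbF.
Qed.

Lemma pick_side n (F : {set {set 'I_n}}) (X : {set 'I_n}) :
  0 < #|X| < n -> WB X \subset mingens F ->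
  exists B : {set 'I_n}, [/\ 0 < #|B| < n, #|B|.*2 <= n, WB B \subset mingens F &
     #|B| * (n - #|B|) = #|X| * (n - #|X|)].
Proof.
move=> cX WX; have cC := cardsC X; rewrite card_ord in cC.
case: (leqP (#|X|.*2) n) => le; first by exists X.
exists (~: X); rewrite WB_C; split => //.
- move: cX; lia.
- move: le; lia.
- have e : #|~: X| = n - #|X| by move: cC; lia.
  rewrite e subKn 1?mulnC //; case/andP: cX => _; lia.
Qed.

Theorem theorem4p8 (k : nat) (hk : 0 < k) :
  [/\ (forall F : {set {set 'I_(4 * k)}},
         Vn2 F <-> exists i : nat, i * i <= k /\ Wl (2 * k - i) F),
      (k != 1 -> forall F : {set {set 'I_(4 * k + 1)}},
         Vn2 F <-> exists i : nat, (2 * i + 1) ^ 2 <= 1 + 4 * k /\ Wl (2 * k - i) F),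
      (forall F : {set {set 'I_5}}, Vn2 F <-> Wl 2 F \/ C5 F),
      (forall F : {set {set 'I_(4 * k + 2)}}, ~ Vn2 F)
    & (forall F : {set {set 'I_(4 * k + 3)}}, ~ Vn2 F)].
Proof.
split.
- move=> F; split; last by case=> i [_ []].
  move=> V; have n0 : 0 < 4 * k by lia.
  case: (fwd V n0) => [[X [cX WX bX]]|reg].
    have [B [cB hB WBm eB]] := pick_side cX WX.
    rewrite -eB in bX.
    exists (2 * k - #|B|); split.
      by apply: t1 => //; case/andP: cB.
    split => //; exists B; split => //; lia.
  have := reg (Ordinal n0); rewrite -mul2n; lia.
- move=> k1 F; split; last by case=> i [_ []].
  move=> V; have n0 : 0 < 4 * k + 1 by lia.
  case: (fwd V n0) => [[X [cX WX bX]]|reg].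
    have [B [cB hB WBm eB]] := pick_side cX WX.
    rewrite -eB in bX.
    exists (2 * k - #|B|); split.
      by apply: t2 => //; case/andP: cB.
    split => //; exists B; split => //; lia.
  case: V => [[sqF Hf] H2].
  exfalso; apply: (reg_false H2 Hf (k := k)) reg; [lia | move: k1 hk; lia].
- move=> F; split; last first.
    by case=> [[]|/C5_Vn2].
  move=> V; have n0 : 0 < 5 by [].
  case: (fwd V n0) => [[X [cX WX bX]]|reg].
    have [B [cB hB WBm eB]] := pick_side cX WX.
    rewrite -eB in bX.
    left; split => //; exists B; split => //.
    by apply: t3 => //; case/andP: cB.
  right; apply: reg5 => // v.
  have := reg v; rewrite -mul2n /=; lia.
- move=> F [[sqF Hf] H2].
  have := mul_bin_diag (4 * k + 2) 1; rewrite bin1 (C2Q H2 Hf).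
  exact: t4.
- move=> F [[sqF Hf] H2].
  have := mul_bin_diag (4 * k + 3) 1; rewrite bin1 (C2Q H2 Hf).
  exact: t5.
Qed.
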